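(* Let $0<\phi<90^\circ$ be the vertical apex angle of the obstacle sensor, let $v_{xy}>0$ and $v_z=\tan(\phi/2)\,v_{xy}$, and consider the visibility-constrained planning graph described in the context. For a node at position $p_n$ and a target position $p_t$ (both voxel centers), let $d=p_n-p_t=(d_x,d_y,d_z)$ and define $$z_e=\min\Big(|d_z|,\ \tan\tfrac{\phi}{2}\sqrt{d_x^2+d_y^2}\Big),\qquad z_z=\frac{\max(0,|d_z|-z_e)}{v_z}\sqrt{v_{xy}^2+v_z^2},$$ $$h(d)=\sqrt{d_x^2+d_y^2+z_e^2}+z_z .$$ Then $h$ is an admissible heuristic for A* search in this graph, i.e. for every node, $h(p_n-p_t)$ is at most the cost of a shortest path in the graph from that node to any node located at the target position $p_t$.
   Context: Planning graph: space is partitioned into an anisotropic regular voxel grid whose voxels have horizontal edge lengths $v_{xy}$ (in $x$ and $y$) and height $v_z=\tan(\phi/2)v_{xy}$. Vertices correspond to voxel centers (possibly augmented by an additional discrete flight-direction coordinate taking one of eight planar directions; this extra coordinate only restricts which edges are present). Each voxel center is connected by edges to the centers of the voxels in its 26-neighborhood (Moore neighborhood), except that the two edges to the voxels directly above and directly below are removed; some further edges (large changes of flight direction) may also be removed. Thus every edge changes position by a vector $(a v_{xy}, b v_{xy}, c v_z)$ with $a,b,c\in\{-1,0,1\}$ and $(a,b)\neq(0,0)$. The cost of an edge is at least the Euclidean length of this displacement (additional nonnegative costs such as obstacle-proximity costs may be added), and the cost of a path is the sum of its edge costs. A heuristic is admissible if it never overestimates the cost of the cheapest path to the target. *)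

(* Defs.v *)
From Stdlib Require Import Reals Lra ZArith List.
Open Scope R_scope.

(* Voxel index (i,j,k) in Z^3; voxel center at (i*vxy, j*vxy, k*vz). *)
Definition voxel := (Z * Z * Z)%type.

Definition vz (phi vxy : R) : R := tan (phi / 2) * vxy.

Definition vx_of (v : voxel) : Z := fst (fst v).
Definition vy_of (v : voxel) : Z := snd (fst v).
Definition vzi_of (v : voxel) : Z := snd v.

Definition valid_step (u v : voxel) : Prop :=
  let a := (vx_of v - vx_of u)%Z in
  let b := (vy_of v - vy_of u)%Z in
  let c := (vzi_of v - vzi_of u)%Z in
  (-1 <= a <= 1)%Z /\ (-1 <= b <= 1)%Z /\ (-1 <= c <= 1)%Z /\
  ~ (a = 0%Z /\ b = 0%Z).

Definition edge_len (phi vxy : R) (u v : voxel) : R :=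
  let a := IZR (vx_of v - vx_of u) * vxy in
  let b := IZR (vy_of v - vy_of u) * vxy in
  let c := IZR (vzi_of v - vzi_of u) * vz phi vxy in
  sqrt (a * a + b * b + c * c).

Definition heur (phi vxy dx dy dz : R) : R :=
  let ze := Rmin (Rabs dz) (tan (phi / 2) * sqrt (dx * dx + dy * dy)) in
  let zz := Rmax 0 (Rabs dz - ze) / vz phi vxy
            * sqrt (vxy * vxy + vz phi vxy * vz phi vxy) in
  sqrt (dx * dx + dy * dy + ze * ze) + zz.

Definition heur_vox (phi vxy : R) (n t : voxel) : R :=
  heur phi vxy (IZR (vx_of n - vx_of t) * vxy)
               (IZR (vy_of n - vy_of t) * vxy)
               (IZR (vzi_of n - vzi_of t) * vz phi vxy).

Fixpoint walk {V : Type} (E : V -> V -> Prop) (x : V) (l : list V) : Prop :=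
  match l with
  | nil => True
  | y :: l' => E x y /\ walk E y l'
  end.

Fixpoint walk_cost {V : Type} (cost : V -> V -> R) (x : V) (l : list V) : R :=
  match l with
  | nil => 0
  | y :: l' => cost x y + walk_cost cost y l'
  end.

(* Main.v *)
Require Import Defs.
From Stdlib Require Import Reals ZArith List Lra Lia Psatz.
Open Scope R_scope.

Definition Mf (k x y z : R) : R := Rmax (sqrt (x*x+y*y+z*z)) (k * Rabs z).

Lemma eucl_tri x1 y1 z1 x2 y2 z2 :
  sqrt ((x1+x2)*(x1+x2)+(y1+y2)*(y1+y2)+(z1+z2)*(z1+z2))
  <= sqrt (x1*x1+y1*y1+z1*z1) + sqrt (x2*x2+y2*y2+z2*z2).
Proof.
  set (A := x1*x1+y1*y1+z1*z1). set (B := x2*x2+y2*y2+z2*z2).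
  assert (hA : 0 <= A) by (unfold A; nra).
  assert (hB : 0 <= B) by (unfold B; nra).
  assert (sA := sqrt_pos A). assert (sB := sqrt_pos B).
  assert (eA := sqrt_sqrt A hA). assert (eB := sqrt_sqrt B hB).
  set (dot := x1*x2+y1*y2+z1*z2).
  assert (hd : dot <= sqrt A * sqrt B).
  { destruct (Rle_dec dot 0) as [h|h]. nra.
    rewrite <- sqrt_mult by lra.
    rewrite <- (sqrt_square dot) by lra.
    apply sqrt_le_1_alt.
    assert (A*B - dot*dot = (x1*y2-x2*y1)*(x1*y2-x2*y1) + (x1*z2-x2*z1)*(x1*z2-x2*z1)
              + (y1*z2-y2*z1)*(y1*z2-y2*z1)) by (unfold A, B, dot; ring).
    assert (0 <= (x1*y2-x2*y1)*(x1*y2-x2*y1)) by apply Rle_0_sqr.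
    assert (0 <= (x1*z2-x2*z1)*(x1*z2-x2*z1)) by apply Rle_0_sqr.
    assert (0 <= (y1*z2-y2*z1)*(y1*z2-y2*z1)) by apply Rle_0_sqr.
    lra. }
  rewrite <- (sqrt_square (sqrt A + sqrt B)) by lra.
  apply sqrt_le_1_alt.
  unfold A, B, dot in *. nra.
Qed.

Lemma M_tri k x1 y1 z1 x2 y2 z2 : 0 <= k ->
  Mf k (x1+x2) (y1+y2) (z1+z2) <= Mf k x1 y1 z1 + Mf k x2 y2 z2.
Proof.
  intro hk. unfold Mf. apply Rmax_lub.
  - eapply Rle_trans. apply eucl_tri.
    apply Rplus_le_compat; apply Rmax_l.
  - eapply Rle_trans with (k * Rabs z1 + k * Rabs z2).
    + rewrite <- Rmult_plus_distr_l. apply Rmult_le_compat_l; auto. apply Rabs_triang.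
    + apply Rplus_le_compat; apply Rmax_r.
Qed.

Lemma heur_le_M phi vxy dx dy dz : 0 < tan (phi/2) -> 0 < vxy ->
  heur phi vxy dx dy dz <=
  Mf (sqrt (vxy*vxy + vz phi vxy * vz phi vxy) / vz phi vxy) dx dy dz.
Proof.
  intros ht hv. unfold heur, Mf, vz. set (t := tan (phi/2)) in *.
  set (r := sqrt (dx*dx+dy*dy)).
  assert (hr : 0 <= r) by apply sqrt_pos.
  assert (er : r * r = dx*dx+dy*dy) by (apply sqrt_sqrt; nra).
  assert (ez : Rabs dz * Rabs dz = dz * dz).
  { rewrite <- Rabs_mult. apply Rabs_pos_eq. nra. }
  assert (hz := Rabs_pos dz).
  destruct (Rle_dec (Rabs dz) (t * r)) as [h|h].
  - rewrite Rmin_left by lra. rewrite ez.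
    replace (Rabs dz - Rabs dz) with 0 by ring. rewrite Rmax_left by lra.
    unfold Rdiv. rewrite Rmult_0_l, Rmult_0_l, Rplus_0_r. apply Rmax_l.
  - rewrite Rmin_right by lra. rewrite Rmax_right by lra.
    set (S := sqrt (1 + t*t)).
    assert (e1 : sqrt (dx*dx+dy*dy+t*r*(t*r)) = r * S).
    { unfold S. replace (dx*dx+dy*dy+t*r*(t*r)) with ((r*r)*(1+t*t)) by (rewrite <- er; ring).
      rewrite sqrt_mult, sqrt_square by nra. reflexivity. }
    assert (e2 : sqrt (vxy*vxy+t*vxy*(t*vxy)) = vxy * S).
    { unfold S. replace (vxy*vxy+t*vxy*(t*vxy)) with ((vxy*vxy)*(1+t*t)) by ring.
      rewrite sqrt_mult, sqrt_square by nra. reflexivity. }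
    rewrite e1, e2.
    replace (r * S + (Rabs dz - t * r) / (t * vxy) * (vxy * S))
      with (vxy * S / (t * vxy) * Rabs dz) by (field; lra).
    apply Rmax_r.
Qed.

Lemma step_M vxy vzz a b c : 0 < vxy -> 0 < vzz ->
  (-1 <= a <= 1)%Z -> (-1 <= b <= 1)%Z -> (-1 <= c <= 1)%Z -> ~ (a = 0%Z /\ b = 0%Z) ->
  Mf (sqrt (vxy*vxy + vzz*vzz) / vzz) (IZR a * vxy) (IZR b * vxy) (IZR c * vzz)
  <= sqrt (IZR a * vxy * (IZR a * vxy) + IZR b * vxy * (IZR b * vxy) + IZR c * vzz * (IZR c * vzz)).
Proof.
  intros hv hz ha hb hc hab. unfold Mf. apply Rmax_lub; [lra|].
  assert (hc2 : (c*c <= 1)%Z) by nia.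
  assert (hab2 : (1 <= a*a + b*b)%Z) by nia.
  apply IZR_le in hc2. apply IZR_le in hab2.
  rewrite mult_IZR in hc2. rewrite plus_IZR, !mult_IZR in hab2.
  rewrite Rabs_mult, (Rabs_pos_eq vzz) by lra.
  replace (sqrt (vxy * vxy + vzz * vzz) / vzz * (Rabs (IZR c) * vzz))
    with (sqrt (vxy * vxy + vzz * vzz) * Rabs (IZR c)) by (field; lra).
  rewrite <- sqrt_Rsqr_abs, <- sqrt_mult by (unfold Rsqr; nra).
  apply sqrt_le_1_alt. unfold Rsqr.
  assert (0 <= vxy*vxy) by nra. nra.
Qed.

Lemma last_cons_eq {V : Type} (l : list V) (y n : V) : last (y :: l) n = last l y.
Proof.
  revert y n. induction l as [|v l IH]; intros y n; [reflexivity|].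
  change (last (v :: l) n = last (v :: l) y). rewrite !IH. reflexivity.
Qed.

Theorem corollary1 (phi vxy : R) (V : Type) (pos : V -> voxel)
  (E : V -> V -> Prop) (cost : V -> V -> R) :
  0 < phi < PI / 2 ->
  0 < vxy ->
  (forall u v, E u v -> valid_step (pos u) (pos v)) ->
  (forall u v, E u v -> edge_len phi vxy (pos u) (pos v) <= cost u v) ->
  forall (n : V) (l : list V) (t : voxel),
    walk E n l ->
    pos (last l n) = t ->
    heur_vox phi vxy (pos n) t <= walk_cost cost n l.
Proof.
  intros hphi hv hstep hcost n l t hw hl.
  assert (ht : 0 < tan (phi/2)) by (apply tan_gt_0; lra).
  assert (hvz : 0 < vz phi vxy) by (unfold vz; nra).
  set (k := sqrt (vxy*vxy + vz phi vxy * vz phi vxy) / vz phi vxy).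
  assert (hk : 0 <= k) by (unfold k; unfold Rdiv; apply Rmult_le_pos; [apply sqrt_pos|left; apply Rinv_0_lt_compat; lra]).
  unfold heur_vox. eapply Rle_trans. apply heur_le_M; auto. fold k.
  revert n hw hl. induction l as [|y l IH]; intros n hw hl.
  - simpl in hl. subst t. simpl. rewrite !Z.sub_diag.
    unfold Mf. rewrite !Rmult_0_l, !Rplus_0_r, sqrt_0, Rabs_R0, Rmult_0_r.
    rewrite Rmax_left; lra.
  - destruct hw as [hE hw]. assert (hl2 : pos (last l y) = t) by (rewrite <- last_cons_eq with (n := n); exact hl). specialize (IH y hw hl2). simpl.
    destruct (hstep _ _ hE) as [ha [hb [hc hab]]].
    assert (hc' := hcost _ _ hE).
    set (a := (vx_of (pos n) - vx_of (pos y))%Z).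
    set (b := (vy_of (pos n) - vy_of (pos y))%Z).
    set (c := (vzi_of (pos n) - vzi_of (pos y))%Z).
    assert (hs : Mf k (IZR a * vxy) (IZR b * vxy) (IZR c * vz phi vxy) <= cost n y).
    { eapply Rle_trans; [apply step_M; auto; unfold a, b, c; lia|].
      eapply Rle_trans; [|exact hc']. unfold edge_len.
      right. f_equal. unfold a, b, c. rewrite !minus_IZR. ring. }
    eapply Rle_trans; [|apply Rplus_le_compat; [exact hs|exact IH]].
    eapply Rle_trans; [|apply M_tri; exact hk].
    right. unfold a, b, c. f_equal; rewrite !minus_IZR; ring.
Qed.
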